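(* If $\mathcal{T}$ is a single-elimination tournament with at least $2$ players and $N$ total brackets, then for every scoring system $\sigma$ we have $\mathrm{res}(\mathcal{T},\sigma)>\tfrac14 N$.
   Context: A single-elimination tournament is a finite directed graph $\mathcal{T}$ such that: (a) $\mathcal{T}$ has exactly one sink (vertex with no out-neighbours); (b) every non-sink vertex has exactly one out-neighbour; (c) $\mathcal{T}$ has no directed cycles; (d) $|N^-(v)|\ne 1$ for every vertex $v$, where $N^-(v)$ denotes the set of in-neighbours of $v$. The players $P(\mathcal{T})$ are the sources and the matches are $M(\mathcal{T})=V(\mathcal{T})\setminus P(\mathcal{T})$. A bracket is a function $B:V(\mathcal{T})\to P(\mathcal{T})$ with $B(a)=a$ for every player $a$ and $B(x)\in\{B(u):u\in N^-(x)\}$ for every match $x$. A scoring system is any function $\sigma:M(\mathcal{T})\to\mathbb{R}_{>0}$. For brackets $B,B'$ let $\mathrm{score}_\sigma(B,B')=\sum_{x\in M(\mathcal{T}):\,B(x)=B'(x)}\sigma(x)$. A set of brackets $\mathcal{B}$ is $\sigma$-resolving if for every pair of distinct brackets $B\ne B'$ there is $B_i\in\mathcal{B}$ with $\mathrm{score}_\sigma(B_i,B)\ne\mathrm{score}_\sigma(B_i,B')$. $\mathrm{res}(\mathcal{T},\sigma)$ is the minimum $r$ such that every set of $r$ brackets is $\sigma$-resolving. *)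

(* Defs.v *)
From HB Require Import structures.
From mathcomp Require Import all_boot all_order all_algebra.
From mathcomp Require Import reals.
Set Implicit Arguments. Unset Strict Implicit. Unset Printing Implicit Defensive.
Import Order.TTheory GRing.Theory Num.Theory.

Section Tournament.
Variable V : finType.
Variable e : rel V.

Definition is_sink (v : V) : bool := [forall w, ~~ e v w].
Definition in_nbhd (v : V) : {set V} := [set u | e u v].
Definition out_nbhd (v : V) : {set V} := [set w | e v w].

Definition single_elim_tournament : Prop :=
  [/\ #|[set v | is_sink v]| = 1%N,
      (forall v, ~~ is_sink v -> #|out_nbhd v| = 1%N),
      (forall u v, e u v -> ~~ connect e v u)
    & (forall v, #|in_nbhd v| != 1%N)].

Definition is_player (v : V) : bool := [forall u, ~~ e u v].
Definition is_match (v : V) : bool := ~~ is_player v.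
Definition players : {set V} := [set v | is_player v].

Definition is_bracket (B : {ffun V -> V}) : bool :=
  [forall v, is_player (B v)] &&
  [forall a, is_player a ==> (B a == a)] &&
  [forall x, is_match x ==> [exists u, e u x && (B x == B u)]].

Definition brackets : {set {ffun V -> V}} := [set B | is_bracket B].

Variable R : realType.
Definition scoring_system (sigma : V -> R) : Prop :=
  forall x, is_match x -> (0 < sigma x)%R.

Definition score (sigma : V -> R) (B B' : {ffun V -> V}) : R :=
  (\sum_(x | is_match x && (B x == B' x)) sigma x)%R.

Definition resolving (sigma : V -> R) (S : {set {ffun V -> V}}) : bool :=
  [forall B, forall B', (is_bracket B && is_bracket B' && (B != B')) ==>
     [exists Bi in S, score sigma Bi B != score sigma Bi B']].

Definition all_sets_resolving (sigma : V -> R) (r : nat) : bool :=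
  [forall S : {set {ffun V -> V}},
     ((S \subset brackets) && (#|S| == r)) ==> resolving sigma S].

Lemma all_sets_resolving_exists (sigma : V -> R) :
  exists r, all_sets_resolving sigma r.
Proof.
exists (#|brackets|.+1); apply/forallP => S; apply/implyP => /andP[sub /eqP cS].
by move: (subset_leq_card sub); rewrite cS ltnn.
Qed.

Definition res (sigma : V -> R) : nat :=
  ex_minn (all_sets_resolving_exists sigma).

End Tournament.

(* Main.v *)
Require Import Defs.
From HB Require Import structures.
From mathcomp Require Import all_boot all_order all_algebra.
From mathcomp Require Import reals.
From mathcomp Require Import zify.

Set Implicit Arguments. Unset Strict Implicit. Unset Printing Implicit Defensive.


Lemma wf_up (V : finType) (e : rel V) :
  (forall u v, e u v -> ~~ connect e v u) ->
  forall P : V -> Prop, (forall v, (forall u, e u v -> P u) -> P v) -> forall v, P v.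
Proof.
move=> acy P IH v.
move: {2}#|[set w | connect e w v]| (leqnn #|[set w | connect e w v]|) => n.
elim: n v => [|n IHn] v hv.
  have : 0 < #|[set w | connect e w v]| by apply/card_gt0P; exists v; rewrite inE connect0.
  by rewrite ltnNge hv.
apply: IH => u euv; apply: IHn.
have : [set w | connect e w u] \proper [set w | connect e w v].
  apply/properP; split.
    apply/subsetP => w; rewrite !inE => hw; apply: connect_trans hw (connect1 euv).
  by exists v; rewrite !inE ?connect0 //; apply: acy.
move/proper_card => h; rewrite -ltnS; exact: leq_trans h hv.
Qed.

Lemma wf_down (V : finType) (e : rel V) :
  (forall u v, e u v -> ~~ connect e v u) ->
  forall P : V -> Prop, (forall v, (forall w, e v w -> P w) -> P v) -> forall v, P v.
Proof.
move=> acy P IH v.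
move: {2}#|[set w | connect e v w]| (leqnn #|[set w | connect e v w]|) => n.
elim: n v => [|n IHn] v hv.
  have : 0 < #|[set w | connect e v w]| by apply/card_gt0P; exists v; rewrite inE connect0.
  by rewrite ltnNge hv.
apply: IH => w evw; apply: IHn.
have : [set x | connect e w x] \proper [set x | connect e v x].
  apply/properP; split.
    apply/subsetP => x; rewrite !inE => hx; apply: connect_trans (connect1 evw) hx.
  by exists v; rewrite !inE ?connect0 //; apply: acy.
move/proper_card => h; rewrite -ltnS; exact: leq_trans h hv.
Qed.

Lemma connect_last (V : finType) (e : rel V) x y :
  connect e x y -> x = y \/ exists2 z, connect e x z & e z y.
Proof.
case/connectP => p; elim/last_ind: p => [|p z _] /= pth ->; first by left.
rewrite last_rcons; right; move: pth; rewrite rcons_path => /andP[pth ez].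
by exists (last x p) => //; apply/connectP; exists p.
Qed.


Lemma connect_first (V : finType) (e : rel V) x y :
  connect e x y -> x = y \/ exists2 z, e x z & connect e z y.
Proof.
case/connectP => [[|z p]] /= pth ->; first by left.
right; case/andP: pth => exz pth; exists z => //; apply/connectP; exists p => //.
Qed.

Lemma out_uniq (V : finType) (e : rel V) : single_elim_tournament e ->
  forall v w1 w2, e v w1 -> e v w2 -> w1 = w2.
Proof.
case=> _ hb _ _ v w1 w2 h1 h2.
have ns : ~~ is_sink e v by apply/forallP => /(_ w1); rewrite h1.
have [w hw] := cards1P (introT eqP (hb v ns)).
have : w1 \in out_nbhd e v by rewrite inE.
have : w2 \in out_nbhd e v by rewrite inE.
by rewrite hw !inE => /eqP -> /eqP ->.
Qed.

Lemma comparable_up (V : finType) (e : rel V) : single_elim_tournament e ->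
  forall p x y, connect e p x -> connect e p y -> connect e x y \/ connect e y x.
Proof.
move=> ht; have [_ _ acy _] := ht.
elim/(wf_down acy) => p IH x y hx hy.
case: (connect_first hx) => [<-|[w epw wx]]; first by left.
case: (connect_first hy) => [<-|[w' epw' wy]]; first by right.
rewrite -(out_uniq ht epw epw') in wy.
exact: IH epw x y wx wy.
Qed.

Lemma disj_sub (V : finType) (e : rel V) : single_elim_tournament e ->
  forall x y m p, e x m -> e y m -> x != y -> connect e p x -> connect e p y -> False.
Proof.
move=> ht; have [_ _ acy _] := ht.
have key : forall x y m, e x m -> e y m -> x != y -> connect e x y -> False.
  move=> x y m hx hy nxy cxy.
  case: (connect_first cxy) => [exy|[w exw wy]]; first by rewrite exy eqxx in nxy.
  rewrite (out_uniq ht exw hx) in wy.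
  by move: (acy _ _ hy); rewrite wy.
move=> x y m p hx hy nxy px py.
case: (comparable_up ht px py) => c; first exact: key hx hy nxy c.
by apply: key hy hx _ c; rewrite eq_sym.
Qed.

Lemma bracket_conn (V : finType) (e : rel V) : single_elim_tournament e ->
  forall B, is_bracket e B -> forall v, connect e (B v) v.
Proof.
move=> ht; have [_ _ acy _] := ht.
move=> B /andP[/andP[_ /forallP hp] /forallP hm].
elim/(wf_up acy) => v IH.
case pv: (is_player e v).
  by move/implyP: (hp v) => /(_ pv) /eqP ->; apply: connect0.
move/implyP: (hm v); rewrite /is_match pv => /(_ isT) /existsP [u /andP[euv /eqP ->]].
exact: connect_trans (IH u euv) (connect1 euv).
Qed.

Lemma reach_sink (V : finType) (e : rel V) : single_elim_tournament e ->
  forall t, (forall v, is_sink e v -> v = t) -> forall v, connect e v t.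
Proof.
move=> ht; have [_ _ acy _] := ht.
move=> t hs; elim/(wf_down acy) => v IH.
case sv: (is_sink e v); first by rewrite (hs v sv) connect0.
move/negbT: sv => /forallPn [w]; rewrite negbK => evw.
exact: connect_trans (connect1 evw) (IH w evw).
Qed.

Lemma player_conn (V : finType) (e : rel V) (p v : V) :
  is_player e p -> connect e v p -> v = p.
Proof.
move=> /forallP hp /connect_last [//|[z _ ezp]].
by move: (hp z); rewrite ezp.
Qed.


Definition Pv (V : finType) (e : rel V) (v : V) := [pred p | is_player e p && connect e p v].

Definition B0 (V : finType) (e : rel V) : {ffun V -> V} :=
  [ffun v => [arg min_(p < odflt v [pick p in Pv e v] | p \in Pv e v) (enum_rank p : nat)]].

Lemma exists_bracket (V : finType) (e : rel V) : single_elim_tournament e ->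
  is_bracket e (B0 e).
Proof.
move=> ht; have [_ _ acy _] := ht.
have ne : forall v, exists p, p \in Pv e v.
  elim/(wf_up acy) => v IH.
  case pv: (is_player e v); first by exists v; rewrite inE pv connect0.
  move/negbT: pv => /forallPn [u]; rewrite negbK => euv.
  have [p] := IH u euv; rewrite !inE => /andP[pp cp].
  by exists p; rewrite inE pp (connect_trans cp (connect1 euv)).
have spec : forall v, B0 e v \in Pv e v /\ forall q, q \in Pv e v -> (enum_rank (B0 e v) <= enum_rank q)%N.
  move=> v; rewrite ffunE.
  case: pickP => [p0 hp0|hn]; last by have [p hp] := ne v; move: (hn p); rewrite hp.
  by case: arg_minnP => //= p hp hmin; split.
have uniq : forall v p, p \in Pv e v -> (forall q, q \in Pv e v -> (enum_rank p <= enum_rank q)%N) -> p = B0 e v.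
  move=> v p hp hmin; have [h1 h2] := spec v.
  apply: enum_rank_inj; apply/val_inj/eqP; rewrite eqn_leq; apply/andP; split.
    exact: hmin.
  exact: h2.
apply/andP; split; first (apply/andP; split).
- by apply/forallP => v; have [/andP[]] := spec v.
- apply/forallP => a; apply/implyP => pa.
  have [/andP[_ c] _] := spec a.
  by rewrite (player_conn pa c).
- apply/forallP => x; apply/implyP => mx.
  have [hp hmin] := spec x; move: (hp); rewrite inE => /andP[pp cp].
  case: (connect_last cp) => [ex|[u cpu eux]].
    by move: mx; rewrite /is_match -ex pp.
  apply/existsP; exists u; rewrite eux /=; apply/eqP; apply: uniq.
    by rewrite inE pp cpu.
  move=> q; rewrite inE => /andP[pq cq]; apply: hmin.
  by rewrite inE pq (connect_trans cq (connect1 eux)).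
Qed.


Definition upd (V : finType) (B : {ffun V -> V}) (t y : V) : {ffun V -> V} :=
  [ffun v => if v == t then y else B v].

Lemma upd_bracket (V : finType) (e : rel V) : single_elim_tournament e ->
  forall t u B, is_sink e t -> e u t -> is_bracket e B -> is_bracket e (upd B t (B u)).
Proof.
move=> ht t u B /forallP st eut /andP[/andP[/forallP hp /forallP hpl] /forallP hm].
have ut : u != t by apply/eqP => ut; move: (st t); rewrite -{1}ut eut.
have tnp : ~~ is_player e t by apply/forallPn; exists u; rewrite negbK.
apply/andP; split; first (apply/andP; split).
- by apply/forallP => v; rewrite ffunE; case: ifP.
- apply/forallP => a; apply/implyP => pa; rewrite ffunE.
  case: (eqVneq a t) => [at0|_]; first by move: tnp pa; rewrite at0 => /negbTE ->.
  by move/implyP: (hpl a) => /(_ pa).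
- apply/forallP => x; apply/implyP => mx; apply/existsP.
  case: (eqVneq x t) => [->|xt].
    by exists u; rewrite eut !ffunE eqxx (negbTE ut) eqxx.
  move/implyP: (hm x) => /(_ mx) /existsP [w /andP[ewx /eqP bw]].
  have wt : w != t by apply/eqP => wt; move: (st x); rewrite -wt ewx.
  by exists w; rewrite ewx !ffunE (negbTE xt) (negbTE wt) bw eqxx.
Qed.

Lemma dupd_bracket (V : finType) (e : rel V) : single_elim_tournament e ->
  forall t u v B, is_sink e t -> e u t -> e v u -> is_bracket e B ->
  is_bracket e (upd (upd B u (B v)) t (B v)).
Proof.
move=> ht t u v B /forallP st eut evu /andP[/andP[/forallP hp /forallP hpl] /forallP hm].
have [_ _ acy _] := ht.
have ut : u != t by apply/eqP => ut; move: (st t); rewrite -{1}ut eut.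
have vt : v != t by apply/eqP => vt; move: (st u); rewrite -vt evu.
have vu : v != u by apply/eqP => vu; move: (acy _ _ evu); rewrite vu connect0.
have tnp : ~~ is_player e t by apply/forallPn; exists u; rewrite negbK.
have unp : ~~ is_player e u by apply/forallPn; exists v; rewrite negbK.
apply/andP; split; first (apply/andP; split).
- by apply/forallP => w; rewrite !ffunE; case: ifP => //; case: ifP.
- apply/forallP => a; apply/implyP => pa; rewrite !ffunE.
  case: (eqVneq a t) => [at0|_]; first by move: tnp pa; rewrite at0 => /negbTE ->.
  case: (eqVneq a u) => [au|_]; first by move: unp pa; rewrite au => /negbTE ->.
  by move/implyP: (hpl a) => /(_ pa).
- apply/forallP => x; apply/implyP => mx; apply/existsP.
  case: (eqVneq x t) => [->|xt].
    by exists u; rewrite eut !ffunE eqxx (negbTE ut) !eqxx.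
  case: (eqVneq x u) => [->|xu].
    by exists v; rewrite evu !ffunE (negbTE ut) eqxx (negbTE vt) (negbTE vu) eqxx.
  move/implyP: (hm x) => /(_ mx) /existsP [w /andP[ewx /eqP bw]].
  have wt : w != t by apply/eqP => wt; move: (st x); rewrite -wt ewx.
  have wu : w != u.
    apply/eqP => wu; rewrite wu in ewx.
    by move: xt; rewrite (out_uniq ht ewx eut) eqxx.
  by exists w; rewrite ewx !ffunE (negbTE xt) (negbTE wt) (negbTE xu) (negbTE wu) bw eqxx.
Qed.

Lemma nondist (V : finType) (e : rel V) (R : realType) (sigma : V -> R) (t : V) (B B' Bi : {ffun V -> V}) :
  (forall x, x != t -> B x = B' x) -> Bi t != B t -> Bi t != B' t ->
  score e sigma Bi B = score e sigma Bi B'.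
Proof.
move=> ag h1 h2; apply: eq_bigl => x.
case: (eqVneq x t) => [->|xt]; first by rewrite (negbTE h1) (negbTE h2) !andbF.
by rewrite ag.
Qed.


Definition Xs (V : finType) (e : rel V) (t a : V) :=
  [set Bi in brackets e | Bi t == a].
Definition Zs (V : finType) (e : rel V) (t a c : V) :=
  [set Bi in brackets e | (Bi t != a) && (Bi t != c)].

Lemma cover_br (V : finType) (e : rel V) (t a c : V) :
  (#|brackets e| <= #|Xs e t a| + #|Xs e t c| + #|Zs e t a c|)%N.
Proof.
have sub : brackets e \subset (Xs e t a :|: Xs e t c) :|: Zs e t a c.
  apply/subsetP => B; rewrite !inE => ->.
  by case: (B t == a); case: (B t == c).
apply: (leq_trans (subset_leq_card sub)).
apply: (leq_trans (leq_card_setU _ _).1).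
by rewrite leq_add2r (leq_card_setU _ _).1.
Qed.

Lemma upd_inj (V : finType) (B1 B2 : {ffun V -> V}) (t y1 y2 : V) :
  B1 t = B2 t -> upd B1 t y1 = upd B2 t y2 -> B1 = B2.
Proof.
move=> h1 h2; apply/ffunP => v; case: (eqVneq v t) => [->//|vt].
by move/ffunP: h2 => /(_ v); rewrite !ffunE (negbTE vt).
Qed.

Lemma Bt_neq (V : finType) (e : rel V) : single_elim_tournament e ->
  forall t u u' a Bi, e u t -> e u' t -> u != u' -> connect e a u -> is_bracket e Bi ->
  Bi u' != a.
Proof.
move=> ht t u u' a Bi eu eu' nu ca bB; apply/eqP => h.
have := bracket_conn ht bB u'; rewrite h => ca'.
exact: (disj_sub ht eu eu' nu ca ca').
Qed.

Lemma in_brackets (V : finType) (e : rel V) B : (B \in brackets e) = is_bracket e B.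
Proof. by rewrite inE. Qed.

Lemma bracket_match (V : finType) (e : rel V) B x :
  is_bracket e B -> is_match e x -> exists2 u, e u x & B x = B u.
Proof.
case/andP => _ /forallP /(_ x) /implyP h /h /existsP [u /andP[eu /eqP]].
by exists u.
Qed.

Lemma bracket_player (V : finType) (e : rel V) B x :
  is_bracket e B -> is_player e x -> B x = x.
Proof. by case/andP => /andP[_ /forallP /(_ x) /implyP h] _ /h /eqP. Qed.

Lemma bracket_isp (V : finType) (e : rel V) B x :
  is_bracket e B -> is_player e (B x).
Proof. by case/andP => /andP[/forallP h _] _. Qed.


Lemma caseA (V : finType) (e : rel V) : single_elim_tournament e ->
  forall t u1 u2 u3, is_sink e t -> e u1 t -> e u2 t -> e u3 t ->
  u1 != u2 -> u2 != u3 -> u3 != u1 ->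
  (#|brackets e| <= 3 * #|Zs e t (B0 e u1) (B0 e u2)|)%N.
Proof.
move=> ht t u1 u2 u3 st e1 e2 e3 n12 n23 n31.
set a := B0 e u1; set c := B0 e u2.
have bB0 := exists_bracket ht.
have ca : connect e a u1 by apply: bracket_conn.
have cc : connect e c u2 by apply: bracket_conn.
have hX : forall d, (#|Xs e t d| <= #|Zs e t a c|)%N.
  move=> d; pose f := fun Bi : {ffun V -> V} => upd Bi t (Bi u3).
  have inj : {in Xs e t d &, injective f}.
    move=> B1 B2; rewrite !inE => /andP[_ /eqP h1] /andP[_ /eqP h2].
    by apply: upd_inj; rewrite h1 h2.
  rewrite -(card_in_imset inj); apply: subset_leq_card.
  apply/subsetP => _ /imsetP [Bi hBi ->]; move: hBi; rewrite !inE => /andP[bBi _].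
  rewrite upd_bracket //= /f ffunE eqxx.
  rewrite (Bt_neq ht e1 e3 _ ca bBi) ?(Bt_neq ht e2 e3 _ cc bBi) //.
  by rewrite eq_sym.
have := cover_br e t a c; have := hX a; have := hX c.
move: #|brackets e| #|Xs e t a| #|Xs e t c| #|Zs e t a c| => n xa xc z.
clear; move=> h1 h2 h3; lia.
Qed.


Lemma caseB (V : finType) (e : rel V) : single_elim_tournament e ->
  forall t u1 u2 v1 v2, is_sink e t -> e u1 t -> e u2 t -> u1 != u2 ->
  e v1 u1 -> e v2 u1 -> v1 != v2 ->
  (#|brackets e| <= 4 * #|Zs e t (B0 e v1) (B0 e u2)|)%N.
Proof.
move=> ht t u1 u2 v1 v2 st e1 e2 n12 ev1 ev2 nv.
set a := B0 e v1; set c := B0 e u2.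
have bB0 := exists_bracket ht.
have ca1 : connect e a v1 by apply: bracket_conn.
have ca : connect e a u1 by apply: connect_trans ca1 (connect1 ev1).
have cc : connect e c u2 by apply: bracket_conn.
have u1t : u1 != t by apply/eqP => h; move: e1 (st); rewrite h => e1 /forallP /(_ t); rewrite e1.
have mt : is_match e t by apply/forallPn; exists u1; rewrite negbK.
have Bu1 : forall Bi, is_bracket e Bi -> Bi t = a -> Bi u1 = a.
  move=> Bi bBi hBi; have [u eu hu] := bracket_match bBi mt.
  case: (eqVneq u1 u) => [->|nu]; first by rewrite -hu.
  by have := Bt_neq ht e1 eu nu ca bBi; rewrite -hu hBi eqxx.
have hXa : (#|Xs e t a| <= #|Zs e t a c|)%N.
  pose h := fun Bi : {ffun V -> V} => upd (upd Bi u1 (Bi v2)) t (Bi v2).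
  have inj : {in Xs e t a &, injective h}.
    move=> B1 B2; rewrite !inE => /andP[b1 /eqP h1] /andP[b2 /eqP h2] hh.
    apply/ffunP => v; case: (eqVneq v t) => [->|vt]; first by rewrite h1 h2.
    case: (eqVneq v u1) => [->|vu]; first by rewrite !Bu1.
    by move/ffunP: hh => /(_ v); rewrite !ffunE (negbTE vt) (negbTE vu).
  rewrite -(card_in_imset inj); apply: subset_leq_card.
  apply/subsetP => _ /imsetP [Bi hBi ->]; move: hBi; rewrite !inE => /andP[bBi _].
  rewrite dupd_bracket //= /h ffunE eqxx.
  rewrite (Bt_neq ht ev1 ev2 nv ca1 bBi) /=.
  apply/eqP => hc.
  have c1 : connect e c u1.
    by rewrite -hc; apply: connect_trans (bracket_conn ht bBi v2) (connect1 ev2).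
  by apply: (disj_sub ht e1 e2 n12 c1 cc).
pose W := [set Bi in brackets e | Bi t == Bi u1].
have hXc : (#|Xs e t c| <= #|W|)%N.
  pose g := fun Bi : {ffun V -> V} => upd Bi t (Bi u1).
  have inj : {in Xs e t c &, injective g}.
    move=> B1 B2; rewrite !inE => /andP[_ /eqP h1] /andP[_ /eqP h2].
    by apply: upd_inj; rewrite h1 h2.
  rewrite -(card_in_imset inj); apply: subset_leq_card.
  apply/subsetP => _ /imsetP [Bi hBi ->]; move: hBi; rewrite !inE => /andP[bBi _].
  by rewrite upd_bracket //= /g !ffunE eqxx (negbTE u1t).
have hW : (#|W| <= #|Xs e t a| + #|Zs e t a c|)%N.
  have sub : W \subset Xs e t a :|: Zs e t a c.
    apply/subsetP => Bi; rewrite !inE => /andP[bBi /eqP hw].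
    rewrite bBi /=; case: (Bi t == a) => //=.
    rewrite hw; apply: (Bt_neq ht e2 e1 _ cc bBi); by rewrite eq_sym.
  exact: leq_trans (subset_leq_card sub) (leq_card_setU _ _).1.
have := cover_br e t a c; move: hXa hXc hW.
move: #|brackets e| #|Xs e t a| #|Xs e t c| #|Zs e t a c| #|W| => n xa xc z w.
clear; move=> h1 h2 h3 h4; lia.
Qed.


Lemma degen (V : finType) (e : rel V) : single_elim_tournament e ->
  forall t u1, (forall v, is_sink e v -> v = t) -> e u1 t ->
  (forall u, e u t -> is_player e u) ->
  (#|brackets e| <= #|in_nbhd e t|)%N.
Proof.
move=> ht t u1 hs e1 hpl.
have mt : is_match e t by apply/forallPn; exists u1; rewrite negbK.
have inj : {in brackets e &, injective (fun B : {ffun V -> V} => B t)}.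
  move=> B1 B2; rewrite !inE => b1 b2 h; apply/ffunP => v.
  case: (eqVneq v t) => [->//|vt].
  case: (connect_last (reach_sink ht hs v)) => [vt'|[z cz ez]]; first by rewrite vt' eqxx in vt.
  have pv : is_player e v by rewrite (player_conn (hpl z ez) cz); exact: hpl.
  by rewrite (bracket_player b1 pv) (bracket_player b2 pv).
rewrite -(card_in_imset inj); apply: subset_leq_card.
apply/subsetP => _ /imsetP [B hB ->]; move: hB; rewrite inE => bB.
have [u eu ->] := bracket_match bB mt.
by rewrite (bracket_player bB (hpl u eu)) inE.
Qed.

Definition good (V : finType) (e : rel V) t (B B' : {ffun V -> V}) (Z : {set {ffun V -> V}}) :=
  [/\ is_bracket e B, is_bracket e B', (forall x, x != t -> B x = B' x), Z \subset brackets e &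
    (forall Bi, Bi \in Z -> (Bi t != B t) && (Bi t != B' t)) /\ B t != B' t].

Lemma mkgood (V : finType) (e : rel V) : single_elim_tournament e ->
  forall t u2 B, is_sink e t -> e u2 t -> is_bracket e B -> B t != B u2 ->
  good e t B (upd B t (B u2)) (Zs e t (B t) (B u2)).
Proof.
move=> ht t u2 B st e2 bB n.
split => //.
- exact: upd_bracket.
- by move=> x xt; rewrite ffunE (negbTE xt).
- by apply/subsetP => Bi; rewrite !inE => /andP[].
- split; first by move=> Bi; rewrite !inE ffunE eqxx => /andP[].
  by rewrite ffunE eqxx.
Qed.


Lemma sink_neq (V : finType) (e : rel V) t u : is_sink e t -> e u t -> u != t.
Proof. by move=> /forallP st eu; apply/eqP => h; move: (st t) eu; rewrite h => /negbTE ->. Qed.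

Lemma two_in (V : finType) (e : rel V) : single_elim_tournament e ->
  forall x u, e u x -> exists u1 u2, [/\ e u1 x, e u2 x & u1 != u2].
Proof.
case=> _ _ _ hd x u eux.
have : (1 < #|in_nbhd e x|)%N.
  have : (0 < #|in_nbhd e x|)%N by apply/card_gt0P; exists u; rewrite inE.
  by move: (hd x); case: #|in_nbhd e x| => [|[|n]].
by case/card_gt1P => u1 [u2 []]; rewrite !inE => h1 h2 n; exists u1, u2.
Qed.

Lemma key (V : finType) (e : rel V) : single_elim_tournament e ->
  (2 <= #|players e|)%N ->
  exists t B B' Z, good e t B B' Z /\
    ((#|brackets e| <= 4 * #|Z|)%N \/ (#|brackets e| <= 3)%N).
Proof.
move=> ht hp2; have [ha hb hc hd] := ht.
have [t ht1] := cards1P (introT eqP ha).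
have st : is_sink e t.
  have : t \in [set v | is_sink e v] by rewrite ht1 inE.
  by rewrite inE.
have hs : forall v, is_sink e v -> v = t.
  move=> v sv; have : v \in [set v | is_sink e v] by rewrite inE.
  by rewrite ht1 inE => /eqP.
have [u0 e0] : exists u, e u t.
  have [p1 [p2 []]] := card_gt1P hp2; rewrite !inE => pp1 pp2 n12.
  have [p [pp pt]] : exists p, is_player e p /\ p != t.
    case: (eqVneq p1 t) => [h|h]; last by exists p1.
    by exists p2; split => //; rewrite -h eq_sym.
  case: (connect_last (reach_sink ht hs p)) => [h|[z _ ez]]; first by rewrite h eqxx in pt.
  by exists z.
have [u1 [u2 [e1 e2 n12]]] := two_in ht e0.
have bB0 := exists_bracket ht.
case: (ltnP 2 #|in_nbhd e t|) => [gt2|le2].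
  have [x [y [z [[]]]]] := card_gt2P gt2; rewrite !inE => ex ey ez [nxy nyz nzx].
  pose B := upd (B0 e) t (B0 e x).
  have Bt : B t = B0 e x by rewrite ffunE eqxx.
  have yt : y != t := sink_neq st ey.
  have By : B y = B0 e y by rewrite ffunE (negbTE yt).
  have nB : B t != B y.
    rewrite Bt By eq_sym; apply: (Bt_neq ht ex ey nxy _ bB0); exact: bracket_conn.
  exists t, B, (upd B t (B y)), (Zs e t (B t) (B y)); split.
    by apply: mkgood => //; apply: upd_bracket.
  left; rewrite Bt By; have := caseA ht st ex ey ez nxy nyz nzx.
  move=> h; apply: leq_trans h _; rewrite leq_mul2r; by rewrite orbT.
case: (boolP [exists u, e u t && is_match e u]) => [/existsP [u /andP[eu mu]]|hno].
  have [w [ew nuw]] : exists w, e w t /\ u != w.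
    case: (eqVneq u1 u) => [h|h]; last by exists u1; rewrite eq_sym.
    by exists u2; split => //; rewrite -h.
  have [v evu] : exists v, e v u.
    by move: mu => /forallPn [v]; rewrite negbK => h; exists v.
  have [v1 [v2 [ev1 ev2 nv]]] := two_in ht evu.
  pose B := upd (upd (B0 e) u (B0 e v1)) t (B0 e v1).
  have bB : is_bracket e B by apply: dupd_bracket.
  have Bt : B t = B0 e v1 by rewrite ffunE eqxx.
  have wt : w != t := sink_neq st ew.
  have Bw : B w = B0 e w by rewrite !ffunE (negbTE wt) eq_sym (negbTE nuw).
  have nB : B t != B w.
    rewrite Bt Bw eq_sym; apply: (Bt_neq ht eu ew nuw _ bB0).
    exact: connect_trans (bracket_conn ht bB0 v1) (connect1 ev1).
  exists t, B, (upd B t (B w)), (Zs e t (B t) (B w)); split.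
    by apply: mkgood.
  left; rewrite Bt Bw. have := caseB ht st eu ew nuw ev1 ev2 nv. exact.
have hpl : forall u, e u t -> is_player e u.
  move=> u eu; move/existsPn: hno => /(_ u); rewrite eu /= /is_match.
  by rewrite negbK.
pose B := upd (B0 e) t (B0 e u1).
have Bt : B t = B0 e u1 by rewrite ffunE eqxx.
have yt : u2 != t := sink_neq st e2.
have By : B u2 = B0 e u2 by rewrite ffunE (negbTE yt).
have nB : B t != B u2.
  rewrite Bt By eq_sym; apply: (Bt_neq ht e1 e2 n12 _ bB0); exact: bracket_conn.
exists t, B, (upd B t (B u2)), (Zs e t (B t) (B u2)); split.
  by apply: mkgood => //; apply: upd_bracket.
right; apply: leq_trans (degen ht hs e1 hpl) _.
by apply: leq_trans le2 _.
Qed.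



Unset Implicit Arguments.
Theorem corollaryA3 (V : finType) (e : rel V) (R : realType) (sigma : V -> R) :
  single_elim_tournament e ->
  (2 <= #|players e|)%N ->
  scoring_system e sigma ->
  (#|brackets e| < 4 * res e sigma)%N.
Proof.
move=> ht hp2 _.
have [t [B [B' [Z [[bB bB' ag subZ [hZ nB]] hsize]]]]] := key ht hp2.
rewrite /res; case: ex_minnP => r hr _.
rewrite ltnNge; apply/negP => hle.
have rZ : (r <= #|Z|)%N.
  case: hsize => h.
    by rewrite -(leq_pmul2l (isT : (0 < 4)%N)); apply: leq_trans hle h.
  have : (4 * r <= 3)%N := leq_trans hle h.
  move=> h4; have -> : r = 0%N by lia.
  by [].
pose S := [set x in take r (enum Z)].
have cS : #|S| = r.
  rewrite cardsE; move/card_uniqP: (take_uniq r (enum_uniq (mem Z))) => ->.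
  by rewrite size_takel // -cardE.
have sS : S \subset Z.
  by apply/subsetP => x; rewrite inE => /mem_take; rewrite mem_enum.
move/forallP: hr => /(_ S) /implyP.
rewrite (subset_trans sS subZ) cS eqxx => /(_ isT) /forallP /(_ B) /forallP /(_ B') /implyP.
have nBB : B != B' by apply/eqP => h; rewrite h eqxx in nB.
rewrite bB bB' nBB => /(_ isT) /existsP [Bi /andP[hBi]].
have /andP[h1 h2] := hZ Bi (subsetP sS _ hBi).
by rewrite (nondist e sigma ag h1 h2) eqxx.
Qed.
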